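(* Let $p^*\in[0,1]$ and let $o^{(1)},o^{(2)},\dots$ be i.i.d. binary observations with $\Pr[o^{(t)}=1]=p^*$. Fix $\beta\in(0,1]$ and an arbitrary initial estimate $\hat p^{(1)}\in[0,1]$, and define $\hat p^{(t+1)}=(1-\beta)\hat p^{(t)}+\beta\,[o^{(t)}=1]$. Then the expected first time $t$ at which $\hat p^{(t)}$ lies in the band $[p^*-\beta,\,p^*+\beta]$ is bounded by $O(\beta^{-2})$. Moreover, the number of updates required for this first visit is lower bounded by $\Omega(\beta^{-1})$ (in the worst case over the initial estimate).
   Context: This is the fixed-rate (''static'') sparse exponential moving average (EMA) estimate of the probability of a single item in the stationary binary setting; $[\cdot]$ denotes the indicator. *)

(* Defs.v *)
From HB Require Import structures.
From mathcomp Require Import all_boot all_order all_algebra.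
From mathcomp Require Import all_classical all_reals all_analysis.
Set Implicit Arguments. Unset Strict Implicit. Unset Printing Implicit Defensive.
Import Order.TTheory GRing.Theory Num.Theory.
Local Open Scope classical_set_scope.
Local Open Scope ring_scope.

(* o : nat -> T -> bool is an i.i.d. sequence of Bernoulli(p) observations on
   the probability space (T, P): each event {o n = 1} is measurable and the
   joint law of every finite prefix o 0, ..., o (n-1) is the product law.
   (o n is the paper's o^(n+1).) *)
Definition iid_bernoulli (R : realType) (d : measure_display)
  (T : measurableType d) (P : probability T R) (o : nat -> T -> bool) (p : R)
  : Prop :=
  (forall n, measurable [set w | o n w]) /\
  (forall (n : nat) (b : nat -> bool),
      P [set w | forall i, (i < n)%N -> o i w = b i] =
      (\prod_(i < n) (if b i then p else 1 - p))%:E).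

(* est beta p1 o n w is the paper's \hat p^{(n+1)}:
   \hat p^{(1)} = p1, \hat p^{(t+1)} = (1-beta) \hat p^{(t)} + beta [o^{(t)} = 1]. *)
Fixpoint est (R : realType) (T : Type) (beta p1 : R) (o : nat -> T -> bool)
  (n : nat) (w : T) : R :=
  match n with
  | 0 => p1
  | n'.+1 => (1 - beta) * est beta p1 o n' w + beta * (o n' w)%:R
  end.

(* First time t >= 1 (paper's indexing) at which \hat p^{(t)} lies in
   [p - beta, p + beta]; +oo if never. *)
Definition hit_time (R : realType) (T : Type) (p beta p1 : R)
  (o : nat -> T -> bool) (w : T) : \bar R :=
  ereal_inf [set ((n.+1)%:R)%:E | n in
             [set n | p - beta <= est beta p1 o n w <= p + beta]].

(* Main.v *)
Require Import Defs.
From HB Require Import structures.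
From mathcomp Require Import all_boot all_order all_algebra.
From mathcomp Require Import all_classical all_reals all_analysis.
From mathcomp Require Import lra measurable_realfun.
Import Order.TTheory GRing.Theory Num.Theory.
Set Implicit Arguments. Unset Strict Implicit. Unset Printing Implicit Defensive.
Local Open Scope classical_set_scope.
Local Open Scope ring_scope.

Definition stp (R : realType) (be x : R) (b : bool) : R := (1 - be) * x + be * (b%:R).
Definition inb (R : realType) (p be x : R) : bool := (p - be <= x <= p + be).

Fixpoint cnt (R : realType) (p be x : R) (s : seq bool) : R :=
  match s with
  | [::] => 0
  | b :: s' => if inb p be x then 0 else 1 + cnt p be (stp be x b) s'
  end.

Fixpoint wt (R : realType) (p : R) (s : seq bool) : R :=
  match s with [::] => 1 | b :: s' => (if b then p else 1 - p) * wt p s' end.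

Fixpoint bl (m : nat) : seq (seq bool) :=
  match m with
  | 0 => [:: [::]]
  | m'.+1 => [seq true :: s | s <- bl m'] ++ [seq false :: s | s <- bl m']
  end.

Definition ES (R : realType) (p : R) m (g : seq bool -> R) :=
  \sum_(s <- bl m) wt p s * g s.

Lemma ES_S (R : realType) (p : R) m g : ES p m.+1 g =
  p * ES p m (fun s => g (true :: s)) + (1 - p) * ES p m (fun s => g (false :: s)).
Proof.
rewrite /ES /= big_cat !big_map /= !mulr_sumr; congr (_ + _);
  by apply: eq_bigr => s _; rewrite mulrA.
Qed.

Lemma ES_ext (R : realType) (p : R) m g h : (forall s, g s = h s) -> ES p m g = ES p m h.
Proof. by move=> gh; apply: eq_bigr => s _; rewrite gh. Qed.

Lemma ES0 (R : realType) (p : R) m : ES p m (fun _ => 0) = 0.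
Proof. by rewrite /ES big1 // => s _; rewrite mulr0. Qed.

Lemma ES1 (R : realType) (p : R) m : ES p m (fun _ => 1) = 1.
Proof.
elim: m => [|m IH]; first by rewrite /ES /= big_seq1 mulr1.
by rewrite ES_S IH !mulr1 addrC subrK.
Qed.

Lemma ES_add1 (R : realType) (p : R) m g : ES p m (fun s => 1 + g s) = 1 + ES p m g.
Proof.
transitivity (ES p m (fun _ => 1) + ES p m g); last by rewrite ES1.
by rewrite /ES -big_split; apply: eq_bigr => s _; rewrite /= mulrDr mulr1.
Qed.

Lemma wt_ge0 (R : realType) (p : R) s : 0 <= p <= 1 -> 0 <= wt p s.
Proof.
move=> /andP[p0 p1]; elim: s => //= b s IH; rewrite mulr_ge0 //.
by case: b => //; rewrite subr_ge0.
Qed.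

Lemma cnt_ge0 (R : realType) (p be x : R) s : 0 <= cnt p be x s.
Proof. by elim: s x => //= b s IH x; case: ifP => // _; rewrite addr_ge0. Qed.

Lemma stpT (R : realType) (be x : R) : stp be x true = (1 - be) * x + be.
Proof. by rewrite /stp /= mulr1. Qed.
Lemma stpF (R : realType) (be x : R) : stp be x false = (1 - be) * x.
Proof. by rewrite /stp /= mulr0 addr0. Qed.

Lemma cnt_below (R : realType) (p be : R) m : 0 <= p <= 1 -> 0 < be <= 1 ->
  forall x, 0 <= x <= 1 -> x <= p + be ->
  ES p m (cnt p be x) <= (1 - x) * (be ^+ 2)^-1.
Proof.
move=> /andP[p0 p1] /andP[b0 b1].
set K := (be ^+ 2)^-1.
have K0 : 0 <= K by rewrite /K invr_ge0 exprn_ge0 // ltW.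
have hK : K * (be * be) = 1 by rewrite /K -expr2 mulVf // expf_neq0 // gt_eqF.
elim: m => [|m IH] x /andP[x0 x1] xp.
  by rewrite /ES /= big_seq1 mulr0 mulr_ge0 // subr_ge0.
rewrite ES_S.
have [hin|hin] := boolP (inb p be x).
  rewrite (@ES_ext _ p m _ (fun _ => 0)); last by move=> s; rewrite /= hin.
  rewrite (@ES_ext _ p m (fun s => cnt p be x (false :: s)) (fun _ => 0));
    last by move=> s; rewrite /= hin.
  by rewrite ES0 !mulr0 addr0 mulr_ge0 // subr_ge0.
rewrite (@ES_ext _ p m _ (fun s => 1 + cnt p be (stp be x true) s));
  last by move=> s; rewrite /= (negbTE hin).
rewrite (@ES_ext _ p m (fun s => cnt p be x (false :: s))
   (fun s => 1 + cnt p be (stp be x false) s)); last by move=> s; rewrite /= (negbTE hin).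
rewrite !ES_add1.
have xl : x < p - be.
  move: hin; rewrite /inb xp andbT -ltNge //.
have hA := IH (stp be x true).
have hB := IH (stp be x false).
rewrite stpT stpF; rewrite stpT in hA; rewrite stpF in hB.
have u0 : 0 <= (1 - be) * x + be by rewrite addr_ge0 // ?mulr_ge0 // ?subr_ge0 // ltW.
have u1 : (1 - be) * x + be <= 1.
  have : (1 - be) * x <= (1 - be) * 1 by rewrite ler_wpM2l // subr_ge0.
  lra.
have d0 : 0 <= (1 - be) * x by rewrite mulr_ge0 // subr_ge0.
have d1 : (1 - be) * x <= 1.
  have : (1 - be) * x <= (1 - be) * 1 by rewrite ler_wpM2l // subr_ge0.
  lra.
have bx : be * x <= be by rewrite -[leRHS]mulr1 ler_wpM2l // ltW.
have bx0 : 0 <= be * x by rewrite mulr_ge0 // ltW.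
have {hA} hA : ES p m (cnt p be ((1 - be) * x + be)) <= (1 - ((1 - be) * x + be)) * K.
  by apply: hA; [rewrite u0 u1 | lra].
have {hB} hB : ES p m (cnt p be ((1 - be) * x)) <= (1 - ((1 - be) * x)) * K.
  by apply: hB; [rewrite d0 d1 | lra].
set A := ES p m (cnt p be ((1 - be) * x + be)) in hA *.
set B := ES p m (cnt p be ((1 - be) * x)) in hB *.
have hpA : p * A <= p * ((1 - ((1 - be) * x + be)) * K) by rewrite ler_wpM2l.
have hpB : (1 - p) * B <= (1 - p) * ((1 - ((1 - be) * x)) * K)
  by rewrite ler_wpM2l // subr_ge0.
have h1 : 1 <= K * be * (p - x).
  rewrite -hK mulrA ler_wpM2l ?mulr_ge0 // ?ltW //; lra.
lra.
Qed.

Lemma cnt_above (R : realType) (p be : R) m : 0 <= p <= 1 -> 0 < be <= 1 ->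
  forall x, 0 <= x <= 1 -> p - be <= x ->
  ES p m (cnt p be x) <= x * (be ^+ 2)^-1.
Proof.
move=> /andP[p0 p1] /andP[b0 b1].
set K := (be ^+ 2)^-1.
have K0 : 0 <= K by rewrite /K invr_ge0 exprn_ge0 // ltW.
have hK : K * (be * be) = 1 by rewrite /K -expr2 mulVf // expf_neq0 // gt_eqF.
elim: m => [|m IH] x /andP[x0 x1] xp.
  by rewrite /ES /= big_seq1 mulr0 mulr_ge0.
rewrite ES_S.
have [hin|hin] := boolP (inb p be x).
  rewrite (@ES_ext _ p m _ (fun _ => 0)); last by move=> s; rewrite /= hin.
  rewrite (@ES_ext _ p m (fun s => cnt p be x (false :: s)) (fun _ => 0));
    last by move=> s; rewrite /= hin.
  by rewrite ES0 !mulr0 addr0 mulr_ge0.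
rewrite (@ES_ext _ p m _ (fun s => 1 + cnt p be (stp be x true) s));
  last by move=> s; rewrite /= (negbTE hin).
rewrite (@ES_ext _ p m (fun s => cnt p be x (false :: s))
   (fun s => 1 + cnt p be (stp be x false) s)); last by move=> s; rewrite /= (negbTE hin).
rewrite !ES_add1.
have xl : p + be < x.
  by move: hin; rewrite /inb xp /= -ltNge.
have hA := IH (stp be x true).
have hB := IH (stp be x false).
rewrite stpT stpF; rewrite stpT in hA; rewrite stpF in hB.
have u0 : 0 <= (1 - be) * x + be by rewrite addr_ge0 // ?mulr_ge0 // ?subr_ge0 // ltW.
have u1 : (1 - be) * x + be <= 1.
  have : (1 - be) * x <= (1 - be) * 1 by rewrite ler_wpM2l // subr_ge0.
  lra.
have d0 : 0 <= (1 - be) * x by rewrite mulr_ge0 // subr_ge0.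
have d1 : (1 - be) * x <= 1.
  have : (1 - be) * x <= (1 - be) * 1 by rewrite ler_wpM2l // subr_ge0.
  lra.
have bx : be * x <= be by rewrite -[leRHS]mulr1 ler_wpM2l // ltW.
have bx0 : 0 <= be * x by rewrite mulr_ge0 // ltW.
have {hA} hA : ES p m (cnt p be ((1 - be) * x + be)) <= ((1 - be) * x + be) * K.
  by apply: hA; [rewrite u0 u1 | lra].
have {hB} hB : ES p m (cnt p be ((1 - be) * x)) <= ((1 - be) * x) * K.
  by apply: hB; [rewrite d0 d1 | lra].
set A := ES p m (cnt p be ((1 - be) * x + be)) in hA *.
set B := ES p m (cnt p be ((1 - be) * x)) in hB *.
have hpA : p * A <= p * (((1 - be) * x + be) * K) by rewrite ler_wpM2l.
have hpB : (1 - p) * B <= (1 - p) * (((1 - be) * x) * K)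
  by rewrite ler_wpM2l // subr_ge0.
have h1 : 1 <= K * be * (x - p).
  rewrite -hK mulrA ler_wpM2l ?mulr_ge0 // ?ltW //; lra.
lra.
Qed.

Lemma cnt_bound (R : realType) (p be : R) m x : 0 <= p <= 1 -> 0 < be <= 1 ->
  0 <= x <= 1 -> ES p m (cnt p be x) <= (be ^+ 2)^-1.
Proof.
move=> hp hb hx; have /andP[x0 x1] := hx.
have K0 : 0 <= (be ^+ 2)^-1 by rewrite invr_ge0 exprn_ge0 //; case/andP: hb => /ltW.
have [xp|xp] := leP x (p + be).
  apply: le_trans (cnt_below m hp hb hx xp) _.
  by rewrite -[leRHS]mul1r ler_wpM2r // lerBlDr lerDl.
apply: le_trans (cnt_above m hp hb hx _) _; first by case/andP: hb => b0 _; lra.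
by rewrite -[leRHS]mul1r ler_wpM2r.
Qed.

Fixpoint pre (T : Type) (o : nat -> T -> bool) (m : nat) (w : T) : seq bool :=
  match m with 0 => [::] | m'.+1 => o 0%N w :: pre (fun i => o i.+1) m' w end.

Lemma size_pre T (o : nat -> T -> bool) m w : size (pre o m w) = m.
Proof. by elim: m o => //= m IH o; rewrite IH. Qed.

Lemma nth_pre T (o : nat -> T -> bool) m w i : (i < m)%N -> nth false (pre o m w) i = o i w.
Proof. by elim: m o i => [|m IH] o [|i] //= hi; rewrite IH. Qed.

Lemma size_bl m s : s \in bl m -> size s = m.
Proof.
elim: m s => [|m IH] s /=; first by rewrite inE => /eqP ->.
by rewrite mem_cat => /orP[] /mapP [t /IH <- ->].
Qed.

Lemma mem_bl s : s \in bl (size s).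
Proof.
elim: s => [|b s IH] /=; first by rewrite inE.
rewrite mem_cat; apply/orP; case: b; [left|right]; apply/mapP; by exists s.
Qed.

Lemma uniq_bl m : uniq (bl m).
Proof.
elim: m => //= m IH; rewrite cat_uniq !map_inj_uniq ?IH //=; last 2 first.
- by move=> a b [].
- by move=> a b [].
rewrite andbT; apply/hasPn => s /mapP [t _ ->]; apply/negP => /mapP [u _ e]; discriminate e.
Qed.

Definition cyl (T : Type) (o : nat -> T -> bool) (s : seq bool) : set T :=
  [set w | forall i, (i < size s)%N -> o i w = nth false s i].

Lemma cylE T (o : nat -> T -> bool) m s w : s \in bl m -> (cyl o s w <-> pre o m w = s).
Proof.
move=> /size_bl hs; split.
  move=> h; apply: (@eq_from_nth _ false); first by rewrite size_pre.
  by move=> i; rewrite size_pre => hi; rewrite nth_pre // h // hs.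
by move=> <- i; rewrite size_pre => hi; rewrite nth_pre.
Qed.

Lemma pre_sum (R : realType) T (o : nat -> T -> bool) m w (G : seq bool -> R) :
  G (pre o m w) = \sum_(s <- bl m) G s * \1_(cyl o s) w.
Proof.
have hin : pre o m w \in bl m by rewrite -{2}(size_pre o m w) mem_bl.
rewrite (bigD1_seq (pre o m w)) ?uniq_bl //= big1_seq ?addr0.
  by rewrite indicE mem_set ?mulr1 // (cylE o w hin).
move=> s /andP[ns sin]; rewrite indicE memNset ?mulr0 //.
by move/(cylE o w sin) => e; move: ns; rewrite e eqxx.
Qed.

Lemma wt_prod (R : realType) (p : R) s :
  wt p s = \prod_(i < size s) (if nth false s i then p else 1 - p).
Proof. by elim: s => [|b s IH] /=; [rewrite big_ord0 | rewrite big_ord_recl /= IH]. Qed.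

Lemma meas_cyl d (T : measurableType d) (o : nat -> T -> bool) :
  (forall n, measurable [set w | o n w]) -> forall s, measurable (cyl o s).
Proof.
move=> mo s; rewrite /cyl; move: (size s) (nth false s) => n b.
elim: n => [|n IH].
  rewrite (_ : [set w | _] = setT) //; apply/seteqP; split => w //= _ i.
have -> : [set w | forall i, (i < n.+1)%N -> o i w = b i] =
   [set w | forall i, (i < n)%N -> o i w = b i] `&` [set w | o n w = b n].
  apply/seteqP; split => w /=.
    by move=> h; split; [move=> i hi; apply: h; rewrite ltnS ltnW | apply: h].
  move=> [h1 h2] i; rewrite ltnS leq_eqVlt => /orP[/eqP -> //|]; exact: h1.
apply: measurableI => //; case: (b n).
  by rewrite (_ : [set w | o n w = true] = [set w | o n w]).
rewrite (_ : [set w | o n w = false] = ~` [set w | o n w]); first exact: measurableC.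
apply/seteqP; split => w /=; first by move=> ->.
by move/negP/negbTE.
Qed.

Lemma meas_pre (R : realType) d (T : measurableType d) (o : nat -> T -> bool)
  (G : seq bool -> R) m :
  (forall n, measurable [set w | o n w]) ->
  measurable_fun setT (fun w => G (pre o m w)).
Proof.
move=> mo.
rewrite (_ : (fun w => G (pre o m w)) = fun w => \sum_(s <- bl m) G s * \1_(cyl o s) w).
  apply: measurable_sum => s.
  apply: (measurable_realfun.measurable_funM (measurable_cst _)).
  by apply: measurable_realfun.measurable_indic; apply: meas_cyl.
by apply/funext => w; rewrite (pre_sum o m w G).
Qed.

Lemma int_pre (R : realType) d (T : measurableType d) (P : probability T R)
  (o : nat -> T -> bool) (p : R) (G : seq bool -> R) m :
  iid_bernoulli P o p -> (forall s, 0 <= G s) ->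
  (\int[P]_w (G (pre o m w))%:E = (ES p m G)%:E)%E.
Proof.
move=> [mo hP] G0.
have mc := meas_cyl mo.
transitivity (\int[P]_w (\sum_(s <- bl m) (G s * \1_(cyl o s) w)%:E))%E.
  by apply: eq_integral => w _; rewrite sumEFin -pre_sum.
rewrite ge0_integral_sum //; last 2 first.
- move=> s; apply/measurable_realfun.measurable_EFinP.
  apply: (measurable_realfun.measurable_funM (measurable_cst _)).
  exact: measurable_realfun.measurable_indic.
- by move=> s w _; rewrite lee_fin mulr_ge0.
rewrite /ES -sumEFin; apply: eq_bigr => s _.
under eq_integral do rewrite EFinM.
rewrite ge0_integralZl_EFin //; last first.
  by apply/measurable_realfun.measurable_EFinP; exact: measurable_realfun.measurable_indic.
rewrite integral_indic // setIT mulrC EFinM; congr (_ * _)%E; rewrite wt_prod; exact: hP.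
Qed.

Lemma estS (R : realType) T (be x : R) (o : nat -> T -> bool) n w :
  est be x o n.+1 w = (1 - be) * est be x o n w + be * (o n w)%:R.
Proof. by []. Qed.

Lemma est_shift (R : realType) T (be x : R) (o : nat -> T -> bool) n w :
  est be x o n.+1 w = est be (stp be x (o 0%N w)) (fun i => o i.+1) n w.
Proof. by elim: n => [|n IH] //; rewrite estS IH. Qed.

Lemma cnt_never (R : realType) T (p be x : R) (o : nat -> T -> bool) m w :
  (forall k, (k < m)%N -> ~~ inb p be (est be x o k w)) ->
  cnt p be x (pre o m w) = m%:R.
Proof.
elim: m x o => [|m IH] x o H //=.
have h0 := H 0%N isT; rewrite /= in h0.
rewrite (negbTE h0) IH ?mulrS // => k hk.
by rewrite -est_shift; apply: H.
Qed.

Lemma cnt_hit (R : realType) T (p be x : R) (o : nat -> T -> bool) m w k :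
  inb p be (est be x o k w) ->
  (forall j, (j < k)%N -> ~~ inb p be (est be x o j w)) -> (k <= m)%N ->
  cnt p be x (pre o m w) = k%:R.
Proof.
elim: m x o k => [|m IH] x o [|k] hk hj hkm //=.
- by rewrite /= in hk; rewrite hk.
have h0 := hj 0%N isT; rewrite /= in h0.
rewrite (negbTE h0) (IH _ _ k) ?mulrS //.
- by rewrite -est_shift.
- by move=> j hj'; rewrite -est_shift; apply: hj.
Qed.

Lemma cnt_mono (R : realType) T (p be x : R) (o : nat -> T -> bool) m w :
  cnt p be x (pre o m w) <= cnt p be x (pre o m.+1 w).
Proof.
elim: m x o => [|m IH] x o /=.
  by case: ifP => // _; rewrite addr_ge0 // cnt_ge0.
by case: ifP => // _; rewrite lerD2l IH.
Qed.

Lemma hit_cvg (R : realType) T (p be x : R) (o : nat -> T -> bool) w :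
  ((fun m => (1 + cnt p be x (pre o m w))%:E) @ \oo --> hit_time p be x o w)%classic.
Proof.
have [ex|nex] := pselect (exists n, inb p be (est be x o n w)).
  case: (ex_minnP ex) => k hk hmin.
  have -> : hit_time p be x o w = (k.+1%:R)%:E.
    apply/le_anti/andP; split.
      by apply: ge_ereal_inf; exists (k.+1%:R)%:E => //; exists k.
    apply: le_ereal_inf_tmp => y [n hn <-]; rewrite lee_fin ler_nat ltnS.
    exact: hmin.
  apply: cvg_near_cst; near=> m.
  have km : (k <= m)%N by near: m; exists k.
  rewrite (@cnt_hit _ _ _ _ _ _ _ _ k) // ?mulrS //.
  move=> j hj; apply/negP => hj'.
  by have := hmin j hj'; rewrite leqNgt hj.
have -> : hit_time p be x o w = +oo%E.
  rewrite /hit_time (_ : [set _ | n in _] = set0) ?ereal_inf0 //.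
  by apply/seteqP; split => y // [n hn _]; apply: nex; exists n.
rewrite (_ : (fun m => _) = (fun m => ((addn 1 m)%:R)%:E)).
  by apply/cvgenyP; exact: cvg_addnl.
apply/funext => m; rewrite cnt_never ?mulrS //.
by move=> k _; apply/negP => hk; apply: nex; exists k.
Unshelve. all: by end_near.
Qed.

Lemma hit_meas (R : realType) d (T : measurableType d) (o : nat -> T -> bool) (p be x : R) :
  (forall n, measurable [set w | o n w]) -> measurable_fun setT (hit_time p be x o).
Proof.
move=> mo.
apply: (@emeasurable_fun_cvg _ _ _ _ (fun m w => (1 + cnt p be x (pre o m w))%:E)).
  move=> m; apply/measurable_realfun.measurable_EFinP.
  exact: (@meas_pre R d T o (fun s => 1 + cnt p be x s) m mo).
by move=> w _; exact: hit_cvg.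
Qed.

Lemma upper (R : realType) (p beta p1 : R) (d : measure_display) (T : measurableType d)
            (P : probability T R) (o : nat -> T -> bool) :
       0 <= p <= 1 -> 0 < beta <= 1 -> 0 <= p1 <= 1 ->
       iid_bernoulli P o p ->
       (\int[P]_w hit_time p beta p1 o w <= (2 / beta ^+ 2)%:E)%E.
Proof.
move=> hp hb hx hiid.
have mo := hiid.1.
pose g := fun m w => (1 + cnt p beta p1 (pre o m w))%:E.
have mg : forall m, measurable_fun setT (g m).
  move=> m; apply/measurable_realfun.measurable_EFinP.
  exact: (@meas_pre R d T o (fun s => 1 + cnt p beta p1 s) m mo).
have g0 : forall m w, setT w -> (0 <= g m w)%E.
  by move=> m w _; rewrite lee_fin addr_ge0 // cnt_ge0.
have ndg : forall w, setT w -> nondecreasing_seq (g^~ w).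
  by move=> w _; apply/nondecreasing_seqP => n; rewrite lee_fin lerD2l cnt_mono.
have hc := @cvg_monotone_convergence _ _ _ P _ measurableT _ mg g0 ndg.
rewrite (eq_integral (fun w => limn (g^~ w))); last first.
  by move=> w _; apply/esym/cvg_lim => //; exact: hit_cvg.
rewrite -(cvg_lim _ hc) //.
apply: lime_le; first exact: cvgP hc.
apply: nearW => m.
rewrite /g (@int_pre R d T P o p (fun s => 1 + cnt p beta p1 s)) //; last first.
  by move=> s; rewrite addr_ge0 // cnt_ge0.
rewrite lee_fin ES_add1.
have hE := cnt_bound m hp hb hx.
have /andP[b0 b1] := hb.
have hK : 1 <= (beta ^+ 2)^-1 by rewrite invf_ge1 ?exprn_gt0 // expr_le1 // ltW.
lra.
Qed.

Lemma est_bnd (R : realType) T (be x : R) (o : nat -> T -> bool) w n :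
  0 <= x <= 1 -> 0 < be <= 1 ->
  [/\ 0 <= est be x o n w <= 1, x - n%:R * be <= est be x o n w
    & est be x o n w <= x + n%:R * be].
Proof.
move=> /andP[x0 x1] /andP[b0 b1].
elim: n => [|n [/andP[e0 e1] hl hu]]; first by rewrite /= mul0r subr0 addr0 x0 x1.
rewrite estS -[n.+1]addn1 natrD mulrDl mul1r.
set e := est be x o n w in e0 e1 hl hu *.
have be0 : 0 <= be * e by rewrite mulr_ge0 // ltW.
have be1 : be * e <= be by rewrite -[leRHS]mulr1 ler_wpM2l // ltW.
have h3 : 0 <= (1 - be) * (1 - e) by rewrite mulr_ge0 // subr_ge0.
have h4 : 0 <= (1 - be) * e by rewrite mulr_ge0 // subr_ge0.
case: (o n w) => /=; rewrite ?mulr1 ?mulr0; split; try lra; by apply/andP; split; lra.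
Qed.

Lemma lower_pt (R : realType) T (p be x : R) (o : nat -> T -> bool) w :
  0 <= p <= 1 -> 0 < be <= 1 -> 0 <= x <= 1 ->
  (x = 1 /\ p <= 2^-1 \/ x = 0 /\ 2^-1 < p) ->
  ((2^-1 / be)%:E <= hit_time p be x o w)%E.
Proof.
move=> hp hb hx hxp; have /andP[b0 b1] := hb.
apply: le_ereal_inf_tmp => y [n /andP[hn1 hn2] <-]; rewrite lee_fin.
rewrite ler_pdivrMr // -[n.+1]addn1 natrD mulrDl mul1r.
have [_ hl hu] := est_bnd o w n hx hb.
case: hxp => [[ex hp2]|[ex hp2]]; subst x; lra.
Qed.

Lemma lower (R : realType) (p beta : R) : 0 <= p <= 1 -> 0 < beta <= 1 ->
       exists p1 : R, 0 <= p1 <= 1 /\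
         forall (d : measure_display) (T : measurableType d)
                (P : probability T R) (o : nat -> T -> bool),
           iid_bernoulli P o p ->
           ((2^-1 / beta)%:E <= \int[P]_w hit_time p beta p1 o w)%E.
Proof.
move=> hp hb; have /andP[b0 b1] := hb.
have [hp2|hp2] := leP p 2^-1.
- exists 1; split; first by rewrite ler01 lexx.
  move=> d T P o hiid.
  have -> : ((2^-1 / beta)%:E = \int[P]_w (cst (2^-1 / beta)%:E w))%E.
    by rewrite integral_cst // -[LHS]mule1; congr (_ * _)%E; exact/esym/probability_setT.
  apply: ge0_le_integral => //.
  + by move=> w _; rewrite lee_fin divr_ge0 // ltW.
  + exact: hit_meas hiid.1.
  + move=> w _; apply: lower_pt => //; first by rewrite ler01 lexx.
    by left.
- exists 0; split; first by rewrite lexx ler01.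
  move=> d T P o hiid.
  have -> : ((2^-1 / beta)%:E = \int[P]_w (cst (2^-1 / beta)%:E w))%E.
    by rewrite integral_cst // -[LHS]mule1; congr (_ * _)%E; exact/esym/probability_setT.
  apply: ge0_le_integral => //.
  + by move=> w _; rewrite lee_fin divr_ge0 // ltW.
  + exact: hit_meas hiid.1.
  + move=> w _; apply: lower_pt => //; first by rewrite lexx ler01.
    by right.
Qed.

Theorem theorem1 (R : realType) :
  (exists C : R, 0 < C /\
     forall (p beta p1 : R) (d : measure_display) (T : measurableType d)
            (P : probability T R) (o : nat -> T -> bool),
       0 <= p <= 1 -> 0 < beta <= 1 -> 0 <= p1 <= 1 ->
       iid_bernoulli P o p ->
       (\int[P]_w hit_time p beta p1 o w <= (C / beta ^+ 2)%:E)%E)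
  /\
  (exists c : R, 0 < c /\
     forall (p beta : R), 0 <= p <= 1 -> 0 < beta <= 1 ->
       exists p1 : R, 0 <= p1 <= 1 /\
         forall (d : measure_display) (T : measurableType d)
                (P : probability T R) (o : nat -> T -> bool),
           iid_bernoulli P o p ->
           ((c / beta)%:E <= \int[P]_w hit_time p beta p1 o w)%E).
Proof.
split.
  exists 2; split => //.
  move=> p beta p1 d T P o hp hb hx hiid; exact: upper.
exists 2^-1; split; first by rewrite invr_gt0.
by move=> p beta hp hb; apply: lower.
Qed.
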